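(* For every $n\in\mathbb{N}$, the boolean quadric polytope $\mathrm{BQP}(n)$ is affinely equivalent to some face of the linear ordering polytope $\mathrm{LOP}(2n)$.
   Context: The boolean quadric polytope $\mathrm{BQP}(n)$ is the convex hull of all vectors $\mathbf{x}=(x_{ij})_{1\le i\le j\le n}\in\{0,1\}^{n(n+1)/2}$ satisfying $x_{ij}=x_{ii}x_{jj}$ for all $1\le i<j\le n$. For $m\in\mathbb{N}$, a linear order on $[m]=\{1,\dots,m\}$ is a set $L$ of ordered pairs $(i,j)$, $i\neq j$, such that for each pair $i\neq j$ exactly one of $(i,j),(j,i)$ lies in $L$, and $L$ is transitive ($(i,j),(j,k)\in L\Rightarrow (i,k)\in L$). Its characteristic vector $\mathbf{y}\in\{0,1\}^{m(m-1)/2}$ has coordinates $y_{ij}$, $1\le i<j\le m$, with $y_{ij}=1$ if $(i,j)\in L$ and $y_{ij}=0$ if $(j,i)\in L$. The linear ordering polytope $\mathrm{LOP}(m)$ is the convex hull of all such characteristic vectors. A hyperplane $H$ is supporting for a polytope $P$ if $P\cap H\neq\emptyset$ and $P$ lies entirely on one side of $H$; a face of $P$ is the intersection of $P$ with one or several supporting hyperplanes. Two polytopes $P,Q$ are affinely equivalent if there is an invertible affine map $\alpha$ with $\alpha(P)=Q$ (equivalently, an affine bijection between them). *)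

(* Defs.v *)
From HB Require Import structures.
From mathcomp Require Import all_boot all_order all_algebra.
From mathcomp Require Import reals.
Set Implicit Arguments. Unset Strict Implicit. Unset Printing Implicit Defensive.
Import Order.TTheory GRing.Theory Num.Theory.
Local Open Scope ring_scope.

Section Polytopes.
Variable R : realType.

Definition conv (I : finType) (S : (I -> R) -> Prop) : (I -> R) -> Prop :=
  fun x => exists (k : nat) (w : 'I_k -> R) (p : 'I_k -> I -> R),
    (forall t, 0 <= w t) /\ \sum_(t < k) w t = 1 /\ (forall t, S (p t)) /\
    (forall i, x i = \sum_(t < k) w t * p t i).

Definition dotp (I : finType) (a x : I -> R) : R := \sum_(i : I) a i * x i.

(** The hyperplane {x | a.x = c} supports P: it meets P and P lies on one
    side of it (w.l.o.g. the side a.x <= c; the other side is obtained by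
    negating a and c). *)
Definition supporting (I : finType) (P : (I -> R) -> Prop) (a : I -> R) (c : R) :=
  (exists x, P x /\ dotp a x = c) /\ (forall x, P x -> dotp a x <= c).

Definition face (I : finType) (P F : (I -> R) -> Prop) :=
  exists (k : nat) (a : 'I_k -> I -> R) (c : 'I_k -> R),
    (0 < k)%N /\ (forall t, supporting P (a t) (c t)) /\
    (forall x, F x <-> (P x /\ forall t, dotp (a t) x = c t)).

Definition affine_map (I J : finType) (f : (I -> R) -> (J -> R)) :=
  exists (M : J -> I -> R) (b : J -> R),
    forall x j, f x j = \sum_(i : I) M j i * x i + b j.

Definition affinely_equivalent (I J : finType)
    (P : (I -> R) -> Prop) (Q : (J -> R) -> Prop) :=
  exists f : (I -> R) -> (J -> R), affine_map f /\
    (forall x, P x -> Q (f x)) /\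
    (forall y, Q y -> exists x, P x /\ f x = y) /\
    (forall x1 x2, P x1 -> P x2 -> f x1 = f x2 -> x1 = x2).

End Polytopes.

(** Index set {(i,j) : 1 <= i <= j <= n} (0-based here). *)
Definition bqp_index (n : nat) := {p : 'I_n * 'I_n | (p.1 <= p.2)%N}.
Definition bqp_diag (n : nat) (i : 'I_n) : bqp_index n :=
  exist (fun p : 'I_n * 'I_n => (p.1 <= p.2)%N) (i, i) (leqnn i).

Definition lop_index (m : nat) := {p : 'I_m * 'I_m | (p.1 < p.2)%N}.

Section Vertices.
Variable R : realType.

Definition bqp_vertex (n : nat) (x : bqp_index n -> R) : Prop :=
  (forall p, x p = 0 \/ x p = 1) /\
  (forall p : bqp_index n,
      x p = x (bqp_diag (sval p).1) * x (bqp_diag (sval p).2)).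

Definition BQP (n : nat) : (bqp_index n -> R) -> Prop := conv (@bqp_vertex n).

Definition linear_order (m : nat) (L : rel 'I_m) : Prop :=
  (forall i, ~~ L i i) /\
  (forall i j, i != j -> (L i j || L j i) /\ ~~ (L i j && L j i)) /\
  (forall i j k, L i j -> L j k -> L i k).

Definition lop_vertex (m : nat) (y : lop_index m -> R) : Prop :=
  exists L : rel 'I_m, linear_order L /\
    forall p : lop_index m, y p = if L (sval p).1 (sval p).2 then 1 else 0.

Definition LOP (m : nat) : (lop_index m -> R) -> Prop := conv (@lop_vertex m).

End Vertices.

(* Main.v *)
Require Import Defs.
From mathcomp Require Import all_boot all_order all_algebra.
From mathcomp Require Import reals.
From mathcomp Require Import zify ring lra.
From Stdlib Require Import FunctionalExtensionality.
Set Implicit Arguments. Unset Strict Implicit. Unset Printing Implicit Defensive.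
Import Order.TTheory GRing.Theory Num.Theory.
Local Open Scope ring_scope.

Ltac natif := repeat match goal with
 | |- context [ (?a <= ?b)%N ] =>
   first [ rewrite (_ : (a <= b)%N = true); last by (apply/idP; lia)
         | rewrite (_ : (a <= b)%N = false); last by (apply/negbTE; rewrite -ltnNge; lia) ]
 end; rewrite /=.

Section Gen.
Variable R : realType.

Lemma dotp_comb (I : finType) (a : I -> R) k (w : 'I_k -> R) (p : 'I_k -> I -> R) y :
  (forall i, y i = \sum_(t < k) w t * p t i) ->
  dotp a y = \sum_(t < k) w t * dotp a (p t).
Proof.
move=> hy; rewrite /dotp.
under eq_bigr do rewrite hy mulr_sumr.
rewrite exchange_big; apply: eq_bigr => t _.
rewrite mulr_sumr; apply: eq_bigr => i _; by rewrite mulrCA.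
Qed.

Lemma b3le (b1 b2 b3 : bool) : (b1 && b2 ==> b3) -> b1%:R + b2%:R - b3%:R <= 1 :> R.
Proof. by case: b1 b2 b3 => [] [] [] //= _; lra. Qed.

Lemma b3eq (b1 b2 b3 : bool) : b1%:R + b2%:R - b3%:R = 1 :> R ->
  (b3 = b1 && b2) /\ (b1 || b2).
Proof. by case: b1 b2 b3 => [] [] [] //= ; lra. Qed.

Lemma b1le (b : bool) : - (b%:R) <= 0 :> R.
Proof. by case: b => /=; lra. Qed.

Lemma b1eq (b : bool) : - (b%:R) = 0 :> R -> b = false.
Proof. by case: b => //=; lra. Qed.

End Gen.
Section Main.
Variable R : realType.
Variable n : nat.
Local Notation m := (2 * n)%N.

Definition eY (p : lop_index m) (u v : nat) : R :=
  ((val (sval p).1 == u) && (val (sval p).2 == v))%:R.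
Definition Y (y : lop_index m -> R) (u v : nat) : R :=
  \sum_(p : lop_index m) eY p u v * y p.
Definition eX (q : bqp_index n) (u v : nat) : R :=
  ((val (sval q).1 == u) && (val (sval q).2 == v))%:R.
Definition X (x : bqp_index n -> R) (u v : nat) : R :=
  \sum_(q : bqp_index n) eX q u v * x q.

Lemma Yval y (p : lop_index m) : Y y (sval p).1 (sval p).2 = y p.
Proof.
rewrite /Y (bigD1 p) //= /eY !eqxx mul1r big1 ?addr0 // => q /negbTE qp.
case E: (_ && _); last by rewrite mul0r.
move/andP: E => [/eqP e1 /eqP e2].
suff: q == p by rewrite qp.
move: q p e1 e2 {qp} => [[a b] ?] [[c d] ?] /= e1 e2.
by apply/eqP; apply: val_inj => /=; congr pair; apply: val_inj.
Qed.

Lemma Xval x (q : bqp_index n) : X x (sval q).1 (sval q).2 = x q.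
Proof.
rewrite /X (bigD1 q) //= /eX !eqxx mul1r big1 ?addr0 // => p /negbTE qp.
case E: (_ && _); last by rewrite mul0r.
move/andP: E => [/eqP e1 /eqP e2].
suff: p == q by rewrite qp.
move: q p e1 e2 {qp} => [[a b] ?] [[c d] ?] /= e1 e2.
by apply/eqP; apply: val_inj => /=; congr pair; apply: val_inj.
Qed.

Lemma YvalN y u v (hu : (u < m)%N) (hv : (v < m)%N) (h : (u < v)%N) :
  Y y u v = y (exist (fun p : 'I_m * 'I_m => (p.1 < p.2)%N) (Ordinal hu, Ordinal hv) h).
Proof. by rewrite -Yval. Qed.

Definition lin (Xr : nat -> nat -> R) (u v : nat) : R :=
  if (v < n)%N then Xr u v - Xr v v
  else if (n <= u)%N then Xr (u - n)%N (v - n)%N - Xr (u - n)%N (u - n)%N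
  else if (u <= v - n)%N then Xr u (v - n)%N else 0.
Definition cst (u v : nat) : R := if (v < n)%N then 1 else if (n <= u)%N then 1 else 0.

Definition fM (p : lop_index m) (q : bqp_index n) : R := lin (eX q) (sval p).1 (sval p).2.
Definition fB (p : lop_index m) : R := cst (sval p).1 (sval p).2.
Definition f (x : bqp_index n -> R) (p : lop_index m) : R :=
  \sum_(q : bqp_index n) fM p q * x q + fB p.

Lemma linE x (p : lop_index m) : \sum_q fM p q * x q = lin (X x) (sval p).1 (sval p).2.
Proof.
rewrite /fM /lin /X; case: ifP => _; [| case: ifP => _; [| case: ifP => _]].
- by under eq_bigr do rewrite mulrBl; rewrite sumrB.
- by under eq_bigr do rewrite mulrBl; rewrite sumrB.
- by [].
- by rewrite big1 // => q _; rewrite mul0r.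
Qed.

Lemma fE x (p : lop_index m) : f x p = lin (X x) (sval p).1 (sval p).2 + cst (sval p).1 (sval p).2.
Proof. by rewrite /f linE. Qed.

Lemma Yf x u v : (u < v)%N -> (v < m)%N -> Y (f x) u v = lin (X x) u v + cst u v.
Proof.
move=> h hv; have hu : (u < m)%N by lia.
by rewrite (YvalN _ hu hv h) fE.
Qed.

Lemma f_comb k (w : 'I_k -> R) (q : 'I_k -> bqp_index n -> R) x :
  \sum_(t < k) w t = 1 ->
  (forall i, x i = \sum_(t < k) w t * q t i) ->
  forall p, f x p = \sum_(t < k) w t * f (q t) p.
Proof.
move=> hw hx p; rewrite /f.
under [RHS]eq_bigr do rewrite mulrDr.
rewrite big_split /= -mulr_suml hw mul1r; congr (_ + _).
rewrite (eq_bigr (fun j => \sum_(t < k) fM p j * (w t * q t j))); last first.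
  by move=> j _; rewrite hx mulr_sumr.
rewrite exchange_big; apply: eq_bigr => t _.
rewrite mulr_sumr; apply: eq_bigr => i _; by rewrite mulrCA.
Qed.

Definition vtx (s : 'I_n -> bool) (q : bqp_index n) : R := (s (sval q).1 && s (sval q).2)%:R.
Definition sn (s : 'I_n -> bool) (k : nat) : bool :=
  match (insub k : option 'I_n) with Some i => s i | None => false end.

Lemma snE s (i : 'I_n) : sn s i = s i.
Proof. by rewrite /sn valK. Qed.

Lemma Xvtx s i j : (i <= j)%N -> (j < n)%N -> X (vtx s) i j = (sn s i && sn s j)%:R.
Proof.
move=> hij hj; have hi : (i < n)%N by lia.
have := Xval (vtx s) (exist (fun p : 'I_n * 'I_n => (p.1 <= p.2)%N) (Ordinal hi, Ordinal hj) hij).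
rewrite /= => ->; rewrite /vtx /=.
by rewrite -(snE s (Ordinal hi)) -(snE s (Ordinal hj)).
Qed.


Definition key (s : 'I_n -> bool) (u : nat) : nat :=
  if (u < n)%N then (if sn s u then 2 * n + 2 * u else 4 * n + 2 * u)%N
  else (if sn s (u - n) then 2 * n + 2 * (u - n) + 1 else 2 * (u - n) + 1)%N.

Definition Lf (s : 'I_n -> bool) : rel 'I_m := fun u v => (key s u < key s v)%N.

Lemma key_inj s (u v : 'I_m) : key s u = key s v -> u = v.
Proof.
move=> e; apply: val_inj => /=.
have hu := ltn_ord u; have hv := ltn_ord v.
move: e; rewrite /key.
case: (sn s u); case: (sn s v); case: (sn s (u - n)); case: (sn s (v - n));
  case: ifP => ?; case: ifP => ? /=; lia.
Qed.

Lemma Lf_lin s : linear_order (Lf s).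
Proof.
split; first by move=> i; rewrite /Lf ltnn.
split; last by move=> i j k; rewrite /Lf; apply: ltn_trans.
move=> i j ij; rewrite /Lf.
have : key s i != key s j by apply: contra ij => /eqP /key_inj ->.
case: ltngtP => //= h _; split => //; apply/negP => /andP [a b];
  by move: (ltn_trans a b); rewrite ltnn.
Qed.

Lemma fam_vertex s : lop_vertex (f (vtx s)).
Proof.
exists (Lf s); split; first exact: Lf_lin.
move=> p; rewrite fE /Lf.
case: p => [[u v]] /= huv.
have hu := ltn_ord u; have hv := ltn_ord v.
rewrite /lin /cst /key.
case: (ltnP v n) => hvn.
  rewrite !Xvtx; try lia. natif.
  by case: (sn s u); case: (sn s v) => /=; natif; lra.
case: (leqP n u) => hun.
  rewrite !Xvtx; try lia. natif.
  by case: (sn s (u - n)); case: (sn s (v - n)) => /=; natif; lra.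
case: (leqP u (v - n)) => huvn.
  rewrite !Xvtx; try lia. natif.
  by case: (sn s u); case: (sn s (v - n)) => /=; natif; lra.
natif.
by case: (sn s u); case: (sn s (v - n)) => /=; natif; lra.
Qed.

Definition Ln (L : rel 'I_m) (u v : nat) : bool :=
  match (insub u : option 'I_m), (insub v : option 'I_m) with
  | Some a, Some b => L a b | _, _ => false end.

Lemma LnE L (a b : 'I_m) : Ln L a b = L a b.
Proof. by rewrite /Ln !valK. Qed.

Lemma LnO L u v (hu : (u < m)%N) (hv : (v < m)%N) : Ln L u v = L (Ordinal hu) (Ordinal hv).
Proof. exact: (LnE L (Ordinal hu) (Ordinal hv)). Qed.

Section LinOrd.
Variable L : rel 'I_m.
Hypothesis hL : linear_order L.

Lemma Ln_tot u v : (u < m)%N -> (v < m)%N -> u != v -> Ln L u v || Ln L v u.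
Proof.
move=> hu hv uv; rewrite !(LnO L hu hv) (LnO L hv hu).
by case: hL => _ [/(_ (Ordinal hu) (Ordinal hv)) h _]; case: h.
Qed.

Lemma Ln_trans u v w : (u < m)%N -> (v < m)%N -> (w < m)%N ->
  Ln L u v -> Ln L v w -> Ln L u w.
Proof.
move=> hu hv hw; rewrite (LnO L hu hv) (LnO L hv hw) (LnO L hu hw).
by case: hL => _ [_ ]; apply.
Qed.

Variable y : lop_index m -> R.
Hypothesis hy : forall p : lop_index m, y p = if L (sval p).1 (sval p).2 then 1 else 0.

Lemma YLn u v : (u < v)%N -> (v < m)%N -> Y y u v = (Ln L u v)%:R.
Proof.
move=> h hv; have hu : (u < m)%N by lia.
rewrite (YvalN _ hu hv h) hy (LnO L hu hv) /=.
by case: (L _ _).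
Qed.
End LinOrd.

Definition term (Yr : nat -> nat -> R) (i j : nat) : R :=
  - Yr j (n + i)%N + (Yr i j + Yr j (n + j)%N - Yr i (n + j)%N)
  + (Yr i (n + i)%N + Yr (n + i)%N (n + j)%N - Yr i (n + j)%N).
Definition G (y : lop_index m -> R) : R :=
  \sum_(i < n) \sum_(j < n) (if (i < j)%N then term (Y y) i j else 0).
Definition cG : R := \sum_(i < n) \sum_(j < n) (if (i < j)%N then 2 else 0).
Definition aG (p : lop_index m) : R :=
  \sum_(i < n) \sum_(j < n) (if (i < j)%N then term (eY p) i j else 0).

Lemma dotp_aG y : dotp aG y = G y.
Proof.
rewrite /dotp /G /aG.
under eq_bigr do rewrite mulr_suml.
rewrite exchange_big; apply: eq_bigr => i _.
under eq_bigr do rewrite mulr_suml.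
rewrite exchange_big; apply: eq_bigr => j _.
case: ifP => _; last by rewrite big1 // => *; rewrite mul0r.
rewrite /term /Y.
under eq_bigr do rewrite ?mulrDl ?mulrBl ?mulNr.
by rewrite !big_split /= !sumrN.
Qed.

Section Vert.
Variable L : rel 'I_m.
Hypothesis hL : linear_order L.
Variable y : lop_index m -> R.
Hypothesis hy : forall p : lop_index m, y p = if L (sval p).1 (sval p).2 then 1 else 0.

Lemma term_vtx (i j : nat) : (i < j)%N -> (j < n)%N ->
  term (Y y) i j = - (Ln L j (n + i))%:R
    + ((Ln L i j)%:R + (Ln L j (n + j))%:R - (Ln L i (n + j))%:R)
    + ((Ln L i (n + i))%:R + (Ln L (n + i) (n + j))%:R - (Ln L i (n + j))%:R).
Proof. by move=> ij jn; rewrite /term !(YLn hy) //; lia. Qed.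

Lemma term_le (i j : nat) : (i < j)%N -> (j < n)%N -> term (Y y) i j <= 2.
Proof.
move=> ij jn; rewrite term_vtx //.
have h1 := b1le R (Ln L j (n + i)).
have h2 : (Ln L i j)%:R + (Ln L j (n + j))%:R - (Ln L i (n + j))%:R <= 1 :> R.
  by apply: b3le; apply/implyP => /andP [a b]; apply: (Ln_trans hL _ _ _ a b); lia.
have h3 : (Ln L i (n + i))%:R + (Ln L (n + i) (n + j))%:R - (Ln L i (n + j))%:R <= 1 :> R.
  by apply: b3le; apply/implyP => /andP [a b]; apply: (Ln_trans hL _ _ _ a b); lia.
lra.
Qed.

Lemma term_eq (i j : nat) : (i < j)%N -> (j < n)%N -> term (Y y) i j = 2 ->
  [/\ Ln L j (n + i) = false,
      (Ln L i (n + j) = Ln L i j && Ln L j (n + j)) /\ (Ln L i j || Ln L j (n + j)) &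
      (Ln L i (n + j) = Ln L i (n + i) && Ln L (n + i) (n + j)) /\
        (Ln L i (n + i) || Ln L (n + i) (n + j))].
Proof.
move=> ij jn; rewrite term_vtx // => e.
have h1 := b1le R (Ln L j (n + i)).
have h2 : (Ln L i j)%:R + (Ln L j (n + j))%:R - (Ln L i (n + j))%:R <= 1 :> R.
  by apply: b3le; apply/implyP => /andP [a b]; apply: (Ln_trans hL _ _ _ a b); lia.
have h3 : (Ln L i (n + i))%:R + (Ln L (n + i) (n + j))%:R - (Ln L i (n + j))%:R <= 1 :> R.
  by apply: b3le; apply/implyP => /andP [a b]; apply: (Ln_trans hL _ _ _ a b); lia.
split.
- by apply: b1eq; lra.
- by apply: b3eq; lra.
- by apply: b3eq; lra.
Qed.

Lemma G_le : G y <= cG.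
Proof.
apply: ler_sum => i _; apply: ler_sum => j _.
by case: ifP => // ij; apply: term_le.
Qed.

Lemma G_eq : G y = cG -> forall (i j : 'I_n), (i < j)%N -> term (Y y) i j = 2.
Proof.
move=> e.
pose D (i j : 'I_n) : R := if (i < j)%N then 2 - term (Y y) i j else 0.
have D0 i j : 0 <= D i j.
  rewrite /D; case: ifP => // ij; rewrite subr_ge0; exact: term_le.
have sD : \sum_(i < n) \sum_(j < n) D i j = 0.
  have -> : \sum_(i < n) \sum_(j < n) D i j = cG - G y.
    rewrite /cG /G -sumrB; apply: eq_bigr => i _; rewrite -sumrB.
    by apply: eq_bigr => j _; rewrite /D; case: ifP => _ //; rewrite subr0.
  by rewrite e subrr.
move=> i j ij.
have hi := @psumr_eq0P _ _ _ _ (fun i _ => sumr_ge0 _ (fun j _ => D0 i j)) sD i isT.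
have hj := @psumr_eq0P _ _ _ _ (fun j _ => D0 i j) hi j isT.
by move: hj; rewrite /D ij => /eqP; rewrite subr_eq0 => /eqP <-.
Qed.
Lemma tight_vtx : G y = cG -> forall p, y p = f (vtx (fun i : 'I_n => Ln L i (n + i))) p.
Proof.
move=> e.
set s := (fun i : 'I_n => Ln L i (n + i)).
have snL k : (k < n)%N -> sn s k = Ln L k (n + k).
  by move=> hk; have := snE s (Ordinal hk).
have T i j : (i < j)%N -> (j < n)%N -> _ := fun ij jn =>
  term_eq ij jn (@G_eq e (Ordinal (leq_ltn_trans (ltnW ij) jn)) (Ordinal jn) ij).
have D i j : (i < j)%N -> (j < n)%N ->
    Ln L i (n + j) = Ln L i (n + i) && Ln L j (n + j).
  move=> ij jn; case: (T i j ij jn) => P [T1a T1b] [T2a T2b].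
  case si: (Ln L i (n + i)); case sj: (Ln L j (n + j)).
  - have h1 : Ln L (n + i) j.
      have := Ln_tot hL (u := n + i) (v := j); rewrite P orbF; apply; lia.
    have h2 : Ln L i j by apply: (Ln_trans hL _ _ _ si h1); lia.
    by apply: (Ln_trans hL _ _ _ h2 sj); lia.
  - by rewrite T1a sj andbF.
  - by rewrite T2a si.
  - by rewrite T2a si.
have A i j : (i < j)%N -> (j < n)%N -> Ln L i j = ~~ Ln L j (n + j) || Ln L i (n + i).
  move=> ij jn; case: (T i j ij jn) => P [T1a T1b] [T2a T2b].
  case sj: (Ln L j (n + j)); last by move: T1b; rewrite sj orbF.
  by have d := D i j ij jn; rewrite T1a sj !andbT in d; rewrite d.
have B i j : (i < j)%N -> (j < n)%N ->
    Ln L (n + i) (n + j) = ~~ Ln L i (n + i) || Ln L j (n + j).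
  move=> ij jn; case: (T i j ij jn) => P [T1a T1b] [T2a T2b].
  case si: (Ln L i (n + i)); last by move: T2b; rewrite si.
  by have d := D i j ij jn; rewrite T2a si /= in d; rewrite d.
move=> p; rewrite fE; case: p => [[u v]] /= huv; rewrite hy /= -LnE.
have hu := ltn_ord u; have hv := ltn_ord v.
rewrite /lin /cst.
have e01 : ((0:R) == 1) = false by rewrite eq_sym oner_eq0.
case: (ltnP v n) => hvn.
  rewrite (A u v) // !Xvtx; try lia. rewrite !snL; try lia.
  by case: (Ln L v (n + v)); case: (Ln L u (n + u)) => /=; lra.
case: (leqP n u) => hun.
  rewrite (_ : Ln L u v = ~~ Ln L (u - n) (n + (u - n)) || Ln L (v - n) (n + (v - n))); last first.
    by have := B (u - n)%N (v - n)%N; rewrite !subnKC //; apply; lia.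
  rewrite !Xvtx; try lia. rewrite !snL; try lia.
  by case: (Ln L (v - n) _); case: (Ln L (u - n) _) => /=; lra.
case: (leqP u (v - n)) => huvn.
  rewrite (_ : Ln L u v = Ln L u (n + u) && Ln L (v - n) (n + (v - n))); last first.
    have ev : (v : nat) = (n + (v - n))%N by lia.
    rewrite {1}ev; case: (ltnP u (v - n)) => h; first by apply: D; lia.
    by rewrite (_ : (v - n)%N = u) ?andbb //; lia.
  rewrite !Xvtx; try lia. rewrite !snL; try lia.
  by case: (Ln L (v - n) _); case: (Ln L u _) => /=; lra.
rewrite (_ : Ln L u v = false) /=; first by rewrite addr0.
have ev : (v : nat) = (n + (v - n))%N by lia.
rewrite {1}ev; case: (T (v - n)%N u _ _) => //; lia.
Qed.
End Vert.

Lemma fam_tight s : G (f (vtx s)) = cG.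
Proof.
rewrite /G /cG; apply: eq_bigr => i _; apply: eq_bigr => j _.
case: ifP => // ij.
have hj := ltn_ord j.
rewrite /term !Yf; try lia.
rewrite /lin /cst; natif.
rewrite !Xvtx; try lia.
rewrite !addKn.
by case: (sn s i); case: (sn s j) => /=; lra.
Qed.

Lemma vtx_vertex s : bqp_vertex (vtx s).
Proof.
split; first by move=> p; rewrite /vtx; case: (_ && _); [right|left].
move=> p; rewrite /vtx /=.
by case: (s (sval p).1); case: (s (sval p).2) => /=; rewrite ?mulr1 ?mulr0.
Qed.

Lemma bqp_vtx q : bqp_vertex q -> q = vtx (fun i => q (bqp_diag i) == 1).
Proof.
case=> h01 hprod; apply: functional_extensionality => p.
have e01 : ((0:R) == 1) = false by rewrite eq_sym oner_eq0.
rewrite hprod /vtx.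
case: (h01 (bqp_diag (sval p).1)) => ->; case: (h01 (bqp_diag (sval p).2)) => ->;
  by rewrite ?e01 ?eqxx /= ?mulr1 ?mulr0 ?mul0r.
Qed.

Lemma LOPv (v : lop_index m -> R) : lop_vertex v -> LOP v.
Proof.
move=> hv; exists 1%N, (fun _ => 1), (fun _ => v).
split; first by move=> _; exact: ler01.
split; first by rewrite big_ord1.
split; first by [].
by move=> i; rewrite big_ord1 mul1r.
Qed.

Lemma valid y : LOP y -> dotp aG y <= cG.
Proof.
move=> [k [w [p [w0 [w1 [pv hy]]]]]].
rewrite (dotp_comb _ hy).
apply: (@le_trans _ _ (\sum_(t < k) w t * cG)).
  apply: ler_sum => t _; apply: ler_wpM2l => //.
  case: (pv t) => L [hL hp]; rewrite dotp_aG; exact: (G_le hL hp).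
by rewrite -mulr_suml w1 mul1r.
Qed.

Lemma main_lemma : exists F : (lop_index m -> R) -> Prop,
    face (@LOP R m) F /\ affinely_equivalent (@BQP R n) F.
Proof.
have e01 : ((0:R) == 1) = false by rewrite eq_sym oner_eq0.
exists (fun y => LOP y /\ dotp aG y = cG).
split.
  exists 1%N, (fun _ => aG), (fun _ => cG).
  split => //; split.
    move=> t; split; last exact: valid.
    exists (f (vtx (fun _ => false))); split; first by apply: LOPv; apply: fam_vertex.
    by rewrite dotp_aG fam_tight.
  move=> x; split; first by move=> [h1 h2]; split.
  by move=> [h1 h2]; split => //; exact: (h2 ord0).
exists f; split; first by exists fM, fB.
split.
  move=> x [k [w [q [w0 [w1 [qv hx]]]]]].
  have hf := f_comb w1 hx.
  split.
    exists k, w, (fun t => f (q t)).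
    split => //; split => //; split => // t.
    by rewrite (bqp_vtx (qv t)); apply: fam_vertex.
  rewrite (dotp_comb _ hf).
  rewrite (eq_bigr (fun t => w t * cG)); first by rewrite -mulr_suml w1 mul1r.
  by move=> t _; rewrite (bqp_vtx (qv t)) dotp_aG fam_tight.
split.
  move=> y [[k [w [v [w0 [w1 [vv hy]]]]]] hc].
  pose s := fun t (i : 'I_n) => Y (v t) i (n + i) == 1.
  exists (fun q => \sum_(t < k) w t * vtx (s t) q).
  split.
    exists k, w, (fun t => vtx (s t)).
    split => //; split => //; split => // t; exact: vtx_vertex.
  have hf := @f_comb k w (fun t => vtx (s t)) _ w1 (fun i => erefl).
  apply: functional_extensionality => p.
  rewrite hf hy; apply: eq_bigr => t _.
  have tight : w t = 0 \/ G (v t) = cG.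
    have nn t' : 0 <= w t' * (cG - dotp aG (v t')).
      by apply: mulr_ge0 => //; rewrite subr_ge0; apply: valid; apply: LOPv.
    have s0 : \sum_(t' < k) w t' * (cG - dotp aG (v t')) = 0.
      under eq_bigr do rewrite mulrBr.
      by rewrite sumrB -mulr_suml w1 mul1r -(dotp_comb _ hy) hc subrr.
    have := @psumr_eq0P _ _ _ _ (fun t' _ => nn t') s0 t isT.
    move/eqP; rewrite mulf_eq0 => /orP [/eqP -> | ]; first by left.
    by rewrite subr_eq0 dotp_aG => /eqP ->; right.
  case: tight => [-> | hG]; first by rewrite !mul0r.
  case: (vv t) => L [hL hp].
  rewrite (tight_vtx hL hp hG p).
  congr (_ * f (vtx _) p).
  apply: functional_extensionality => i; have hi := ltn_ord i; rewrite /s (YLn hp); try lia.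
  by case: (Ln L i (n + i)); rewrite ?eqxx ?e01.
move=> x1 x2 _ _ e.
apply: functional_extensionality => q.
have kq : forall x, x q = Y (f x) (sval q).1 (n + (sval q).2).
  move=> x; have hq := svalP q; have h1 := ltn_ord (sval q).1; have h2 := ltn_ord (sval q).2.
  rewrite Yf; try lia.
  rewrite /lin /cst; natif.
  by rewrite addKn hq Xval addr0.
by rewrite !kq e.
Qed.

End Main.

Theorem theorem1 (R : realType) (n : nat) :
  exists F : (lop_index (2 * n) -> R) -> Prop,
    face (@LOP R (2 * n)) F /\ affinely_equivalent (@BQP R n) F.
Proof. exact: main_lemma. Qed.
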